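(* Let $1 \le k_1, k_2$ be integers. (a) If $m$ is an integer with $k_1 + k_2 - m \le \dim V$, then the Euclidean space $\mathfrak M$ (that is, the family $\mathcal L$ of lines together with the line orthogonality $\perp$ on $\mathcal L$) is definable in the structure $\langle S, \mathcal H_{k_1}, \mathcal H_{k_2}, \perp^{m}_{k_1,k_2}\rangle$. (b) If moreover $k_1,k_2<\dim V$, then the Euclidean space $\mathfrak M$ is definable in the structure $\mathfrak K := \langle S, \mathcal H_{k_1}, \mathcal H_{k_2}, \perp^{\circ}\cap(\mathcal H_{k_1}\times\mathcal H_{k_2})\rangle$.
   Context: Let $V$ be a vector space over a field with a nondegenerate symmetric bilinear form $\xi$ having no isotropic vectors ($\xi(v,v)\neq 0$ for $v\neq 0$). The Euclidean space $\mathfrak M$ has point set $S=V$; its (affine) subspaces are the sets $p+W$ ($p\in V$, $W$ a linear subspace, called the direction), of dimension $\dim W$ (points have dimension $0$). $\mathcal H_k$ is the family of $k$-dimensional subspaces and $\mathcal L=\mathcal H_1$ the family of lines; $\dim\mathfrak M=\dim V$. For lines, $L_1\perp L_2$ iff their directions are $\xi$-orthogonal. For subspaces $X_1,X_2$, $X_1\sqcup X_2$ is the least subspace containing $X_1\cup X_2$. For nonempty subspaces $X,Y$: $X\perp Y$ iff $\xi(b-a,d-c)=0$ for all $a,b\in X$, $c,d\in Y$; and $X\perp_x Y$ iff $X\perp Y$ and $X\cap Y\neq\emptyset$. Define $X_1\perp^{\circ}X_2$ iff there are a point $q\in X_1\cap X_2$ and subspaces $Z_1,Z_2$ with $q\in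 Z_1,Z_2$, $Z_i\perp_x X_1\cap X_2$, $Z_1\perp_x Z_2$, and $(X_1\cap X_2)\sqcup Z_i=X_i$ for $i=1,2$. Define $X_1\perp^{*}X_2$ iff $X_1\perp^{\circ}X_2$ and $X_1\cap X_2\neq X_1$, $X_1\cap X_2\neq X_2$. Write $X_1\perp^{m}_{k_1,k_2}X_2$ iff $X_1\perp^{*}X_2$, $X_1\in\mathcal H_{k_1}$, $X_2\in\mathcal H_{k_2}$ and $X_1\cap X_2\in\mathcal H_m$. ''Definable'' means first-order definable. *)

(* Defs.v *)
From mathcomp Require Import all_boot all_algebra.
Set Implicit Arguments. Unset Strict Implicit. Unset Printing Implicit Defensive.
Import GRing.Theory.
Local Open Scope ring_scope.

Section Euclid.
Variables (F : fieldType) (V : lmodType F).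

Definition pset := V -> Prop.

Definition free_fam (k : nat) (v : 'I_k -> V) : Prop :=
  forall c : 'I_k -> F, \sum_(i < k) c i *: v i = 0 -> forall i, c i = 0.

Definition dim_ge (n : nat) : Prop := exists v : 'I_n -> V, free_fam v.

Definition is_Hk (k : nat) (X : pset) : Prop :=
  exists (p : V) (v : 'I_k -> V), free_fam v /\
    forall x, X x <-> exists c : 'I_k -> F, x = p + \sum_(i < k) c i *: v i.

Definition lin_subspace (W : pset) : Prop :=
  W 0 /\ (forall x y, W x -> W y -> W (x + y)) /\ (forall (a : F) x, W x -> W (a *: x)).

Definition subspace (X : pset) : Prop :=
  exists (p : V) (W : pset), lin_subspace W /\
    forall x, X x <-> exists w, W w /\ x = p + w.

Definition inter (X Y : pset) : pset := fun x => X x /\ Y x.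
Definition subset (X Y : pset) : Prop := forall x, X x -> Y x.
Definition seteq (X Y : pset) : Prop := forall x, X x <-> Y x.

Definition is_join (X Y Z : pset) : Prop :=
  subspace Z /\ subset X Z /\ subset Y Z /\
  forall D, subspace D -> subset X D -> subset Y D -> subset Z D.

Variable xi : V -> V -> F.

Definition orth (X Y : pset) : Prop :=
  (exists a, X a) /\ (exists c, Y c) /\
  forall a b c d, X a -> X b -> Y c -> Y d -> xi (b - a) (d - c) = 0.

Definition orth_x (X Y : pset) : Prop := orth X Y /\ exists q, X q /\ Y q.

Definition perp_circ (X1 X2 : pset) : Prop :=
  exists q, inter X1 X2 q /\
  exists Z1 Z2 : pset, subspace Z1 /\ subspace Z2 /\ Z1 q /\ Z2 q /\
    orth_x Z1 (inter X1 X2) /\ orth_x Z2 (inter X1 X2) /\ orth_x Z1 Z2 /\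
    is_join (inter X1 X2) Z1 X1 /\ is_join (inter X1 X2) Z2 X2.

Definition perp_star (X1 X2 : pset) : Prop :=
  perp_circ X1 X2 /\ ~ seteq (inter X1 X2) X1 /\ ~ seteq (inter X1 X2) X2.

Definition perp_m (m k1 k2 : nat) (X1 X2 : pset) : Prop :=
  perp_star X1 X2 /\ is_Hk k1 X1 /\ is_Hk k2 X2 /\ is_Hk m (inter X1 X2).

Definition perp_circ_res (k1 k2 : nat) (X1 X2 : pset) : Prop :=
  perp_circ X1 X2 /\ is_Hk k1 X1 /\ is_Hk k2 X2.

(* The Euclidean space M = <S, L, \perp>, encoded on points:
   collinearity of three points, and orthogonality of the lines ab, cd. *)
Definition collinear (a b c : V) : Prop :=
  exists L, is_Hk 1 L /\ L a /\ L b /\ L c.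

Definition line_perp (a b c d : V) : Prop :=
  a <> b /\ c <> d /\
  exists L1 L2, is_Hk 1 L1 /\ is_Hk 1 L2 /\ L1 a /\ L1 b /\ L2 c /\ L2 d /\
    orth L1 L2.

End Euclid.

(* First-order formulas over the three-sorted structure
   <S, H_A, H_B, R> (points, objects of the first family, objects of the
   second family, incidence point-in-object, and a binary relation R
   between A-objects and B-objects). *)
Inductive form : Type :=
| FEqP of nat & nat
| FEqA of nat & nat
| FEqB of nat & nat
| FInA of nat & nat
| FInB of nat & nat
| FRel of nat & nat
| FNeg of form
| FAnd of form & form
| FExP of nat & form
| FExA of nat & form
| FExB of nat & form.

Definition upd (T : Type) (e : nat -> T) (i : nat) (x : T) : nat -> T :=
  fun n => if n == i then x else e n.

Section Semantics.
Variables (F : fieldType) (V : lmodType F).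
Variables (DA DB : pset V -> Prop) (R : pset V -> pset V -> Prop).

Fixpoint eval (eP : nat -> V) (eA eB : nat -> pset V) (f : form) : Prop :=
  match f with
  | FEqP i j => eP i = eP j
  | FEqA i j => seteq (eA i) (eA j)
  | FEqB i j => seteq (eB i) (eB j)
  | FInA i j => eA j (eP i)
  | FInB i j => eB j (eP i)
  | FRel i j => R (eA i) (eB j)
  | FNeg g => ~ eval eP eA eB g
  | FAnd g h => eval eP eA eB g /\ eval eP eA eB h
  | FExP i g => exists x : V, eval (upd eP i x) eA eB g
  | FExA i g => exists X, DA X /\ eval eP (upd eA i X) eB g
  | FExB i g => exists X, DB X /\ eval eP eA (upd eB i X) g
  end.

Definition definable_M (xi : V -> V -> F) : Prop :=
  exists phiC phiP : form,
  forall (eP : nat -> V) (eA eB : nat -> pset V),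
    (forall i, DA (eA i)) -> (forall i, DB (eB i)) ->
    (eval eP eA eB phiC <-> collinear (eP 0%N) (eP 1%N) (eP 2%N)) /\
    (eval eP eA eB phiP <-> line_perp xi (eP 0%N) (eP 1%N) (eP 2%N) (eP 3%N)).

End Semantics.

(* Main.v *)
Require Import Defs.
From mathcomp Require Import all_boot all_algebra.
From Stdlib Require Import Classical.
From mathcomp Require Import zify.
Set Implicit Arguments. Unset Strict Implicit. Unset Printing Implicit Defensive.
Import GRing.Theory.
Local Open Scope ring_scope.

Section Main.
Variables (F : fieldType) (V : lmodType F) (xi : V -> V -> F).
Hypothesis xi_sym : forall u v, xi u v = xi v u.
Hypothesis xi_lin : forall (a : F) u v w, xi (a *: u + v) w = a * xi u w + xi v w.
Hypothesis xi_aniso : forall u, u <> 0 -> xi u u <> 0.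

Lemma xiDl u v w : xi (u + v) w = xi u w + xi v w.
Proof. by rewrite -[u in LHS]scale1r xi_lin mul1r. Qed.
Lemma xi0l w : xi 0 w = 0.
Proof. have h := xiDl 0 0 w; rewrite addr0 in h; apply: (addrI (xi 0 w)); by rewrite addr0 -h. Qed.
Lemma xiZl a u w : xi (a *: u) w = a * xi u w.
Proof. by rewrite -[a *: u]addr0 xi_lin xi0l addr0. Qed.
Lemma xiNl u w : xi (- u) w = - xi u w.
Proof. by rewrite -scaleN1r xiZl mulN1r. Qed.
Lemma xiBl u v w : xi (u - v) w = xi u w - xi v w.
Proof. by rewrite xiDl xiNl. Qed.
Lemma xiDr u v w : xi w (u + v) = xi w u + xi w v.
Proof. by rewrite xi_sym xiDl !(xi_sym w). Qed.
Lemma xi0r w : xi w 0 = 0.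
Proof. by rewrite xi_sym xi0l. Qed.
Lemma xiZr a u w : xi w (a *: u) = a * xi w u.
Proof. by rewrite xi_sym xiZl xi_sym. Qed.
Lemma xiNr u w : xi w (- u) = - xi w u.
Proof. by rewrite xi_sym xiNl xi_sym. Qed.
Lemma xiBr u v w : xi w (u - v) = xi w u - xi w v.
Proof. by rewrite xiDr xiNr. Qed.
Lemma xi_suml (I : Type) (r : seq I) (P : pred I) (f : I -> V) w :
  xi (\sum_(i <- r | P i) f i) w = \sum_(i <- r | P i) xi (f i) w.
Proof. exact: (big_morph (fun x => xi x w) (fun x y => xiDl x y w) (xi0l w)). Qed.

Lemma dep_lemma n j (e : 'I_n -> V) (s : 'I_j -> V) (M : 'M[F]_(n, j)) :
  (j < n)%N -> (forall i, e i = \sum_k M i k *: s k) -> ~ free_fam e.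
Proof.
move=> ltjn He Hfree.
have : kermx M != 0.
  apply/eqP => K0; have := mxrank_ker M; rewrite K0 mxrank0.
  have := rank_leq_col M; lia.
case/matrix0Pn => i0 [k0 nz].
have : \sum_i kermx M i0 i *: e i = 0.
  rewrite (eq_bigr (fun i => \sum_k (kermx M i0 i * M i k) *: s k)); last first.
    by move=> i _; rewrite He scaler_sumr; apply: eq_bigr => k _; rewrite scalerA.
  rewrite exchange_big /= big1 // => k _.
  rewrite -scaler_suml.
  have -> : \sum_i kermx M i0 i * M i k = (kermx M *m M) i0 k by rewrite mxE.
  by rewrite mulmx_ker mxE scale0r.
move/Hfree => /(_ k0) /eqP; by rewrite (negbTE nz).
Qed.

Definition orthseq (s : seq V) :=
  (forall i, (i < size s)%N -> s`_i != 0) /\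
  (forall i j, (i < size s)%N -> (j < size s)%N -> i != j -> xi s`_i s`_j = 0).

Lemma xi_self_neq0 u : u != 0 -> xi u u != 0.
Proof. by move=> /eqP h; apply/eqP; apply: xi_aniso. Qed.

Lemma ext1 N s : dim_ge V N -> orthseq s -> (size s < N)%N ->
  exists w, w != 0 /\ forall k, (k < size s)%N -> xi w s`_k = 0.
Proof.
case=> e fe [snz sor] lt.
apply: NNPP => H.
set j := size s in lt snz sor H.
pose c i (k : 'I_j) := xi (e i) s`_k / xi s`_k s`_k.
have orth i (l : nat) : (l < j)%N -> xi (e i - \sum_(k < j) c i k *: s`_k) s`_l = 0.
  move=> lj; rewrite xiBl xi_suml (bigD1 (Ordinal lj)) //= big1.
    rewrite addr0 xiZl /c divfK ?subrr //; exact: xi_self_neq0 (snz _ lj).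
  move=> k /eqP nk; rewrite xiZl sor ?mulr0 //.
  by apply/eqP => kl; apply: nk; apply: val_inj.
have E i : e i = \sum_k (\matrix_(i0, k0) c i0 k0) i k *: (fun k : 'I_j => s`_k) k.
  rewrite (eq_bigr (fun k : 'I_j => c i k *: s`_k)); last by move=> k _; rewrite mxE.
  apply/eqP; rewrite -subr_eq0; apply/eqP.
  case: (eqVneq (e i - \sum_(k < j) c i k *: s`_k) 0) => // nz; exfalso; apply: H.
  by exists (e i - \sum_(k < j) c i k *: s`_k); split; last exact: orth.
exact: (dep_lemma lt E fe).
Qed.

Lemma extN N s : dim_ge V N -> orthseq s -> (size s <= N)%N ->
  exists t, orthseq t /\ size t = N /\ forall i, (i < size s)%N -> t`_i = s`_i.
Proof.
move=> hd.
move: {2}(N - size s)%N (erefl (N - size s)%N) => d.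
elim: d s => [|d IH] s hd0 os le.
  exists s; split=> //; split=> //; lia.
have lt : (size s < N)%N by lia.
have [w [wnz wo]] := ext1 hd os lt.
have os' : orthseq (rcons s w).
  case: os => snz sor; split.
    move=> i; rewrite size_rcons ltnS nth_rcons => hi.
    case: (ltnP i (size s)) => h; first by apply: snz.
    have -> : i = size s by lia.
    by rewrite eqxx.
  move=> i k; rewrite size_rcons !ltnS !nth_rcons => hi hk.
  case: (ltnP i (size s)) => h1; case: (ltnP k (size s)) => h2.
  - by apply: sor.
  - have -> : k = size s by lia.
    rewrite eqxx => _; rewrite xi_sym; exact: (wo _ h1).
  - have -> : i = size s by lia.
    by rewrite eqxx => _; exact: (wo _ h2).
  - lia.
have [t [ot [st pt]]] := IH (rcons s w) ltac:(rewrite size_rcons; lia) os' ltac:(rewrite size_rcons; lia).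
exists t; split=> //; split=> // i hi.
by rewrite pt ?size_rcons ?nth_rcons ?hi // ltnS ltnW.
Qed.

Lemma orth_free k (h : 'I_k -> V) : (forall i, h i != 0) ->
  (forall i j, i != j -> xi (h i) (h j) = 0) -> free_fam h.
Proof.
move=> hnz hor c H j.
have := f_equal (fun w => xi w (h j)) H => /=.
rewrite xi0l xi_suml (bigD1 j) //= big1 ?addr0 => [|i nij]; last by rewrite xiZl hor ?mulr0.
rewrite xiZl => /eqP; rewrite mulf_eq0 (negbTE (xi_self_neq0 (hnz j))) orbF.
by move/eqP.
Qed.

Lemma affine_comb (D : pset V) a b c : subspace D -> D a -> D b -> D c -> D (a + b - c).
Proof.
case=> p [W [[W0 [WD WZ]] HD]] /HD [wa [Wa ->]] /HD [wb [Wb ->]] /HD [wc [Wc ->]].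
apply/HD; exists (wa + (wb + (-1) *: wc)); split.
  by apply: (WD _ _ Wa); apply: (WD _ _ Wb); apply: (WZ _ _ Wc).
by rewrite scaleN1r opprD addrACA -addrA -[p + wb - wc]addrA addKr -addrA.
Qed.

Lemma affine_line (D : pset V) a b t : subspace D -> D a -> D b -> D (a + t *: (b - a)).
Proof.
case=> p [W [[W0 [WD WZ]] HD]] /HD [wa [Wa ->]] /HD [wb [Wb ->]].
apply/HD; exists (wa + t *: (wb + (-1) *: wa)); split.
  by apply: (WD _ _ Wa); apply: (WZ); apply: (WD _ _ Wb); apply: (WZ _ _ Wa).
by rewrite scaleN1r opprD addrACA subrr add0r -addrA.
Qed.

Lemma helper3 (a b c : V) : a + (b + c) = a + b + (a + c) - a.
Proof. by rewrite -[RHS]addrA [a + c - a]addrC addKr addrA. Qed.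

Section Flat.
Variables (N : nat) (g : 'I_N -> V).
Hypothesis gnz : forall i, g i != 0.
Hypothesis gor : forall i j, i != j -> xi (g i) (g j) = 0.
Implicit Types (A B : {set 'I_N}) (j : 'I_N) (p x : V).

Definition flat (p : V) (A : {set 'I_N}) : pset V :=
  fun x => exists c : 'I_N -> F, x = p + \sum_(i in A) c i *: g i.

Lemma coefE (A : {set 'I_N}) c j :
  xi (\sum_(i in A) c i *: g i) (g j) = if j \in A then c j * xi (g j) (g j) else 0.
Proof.
rewrite xi_suml; case: ifP => jA.
  rewrite (bigD1 j) //= big1 ?addr0 ?xiZl // => i /andP[_ nij].
  by rewrite xiZl gor ?mulr0.
rewrite big1 // => i iA; rewrite xiZl gor ?mulr0 //.
by apply/eqP => ij; move: jA; rewrite -ij iA.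
Qed.

Lemma flat_p p A : flat p A p.
Proof. by exists (fun _ => 0); rewrite big1 ?addr0 // => i _; rewrite scale0r. Qed.

Lemma flat_gen p A j (a : F) : j \in A -> flat p A (p + a *: g j).
Proof.
move=> jA; exists (fun i => if i == j then a else 0); congr (_ + _).
rewrite (bigD1 j) //= eqxx big1 ?addr0 // => i /andP[_ /negbTE ->]; by rewrite scale0r.
Qed.

Lemma flat_notin p A x j : flat p A x -> j \notin A -> xi (x - p) (g j) = 0.
Proof.
case=> c ->; rewrite addrC addKr coefE => /negbTE ->; done.
Qed.

Lemma flat_sub p (A B : {set 'I_N}) : A \subset B -> Defs.subset (flat p A) (flat p B).
Proof.
move=> sAB x [c ->]; exists (fun i => if i \in A then c i else 0); congr (_ + _).
rewrite (big_setID (A:=B) A) /= (setIidPr sAB) [X in _ + X]big1 ?addr0.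
  by apply: eq_bigr => i ->.
by move=> i; rewrite inE => /andP[/negbTE -> _]; rewrite scale0r.
Qed.

Lemma flat_diff p A a b : flat p A a -> flat p A b ->
  exists e, b - a = \sum_(i in A) e i *: g i.
Proof.
case=> ca -> [cb ->]; exists (fun i => cb i - ca i).
rewrite opprD addrACA subrr add0r -sumrB.
by apply: eq_bigr => i _; rewrite scalerBl.
Qed.

Lemma orth_sums (A B : {set 'I_N}) e f : (forall i, i \in A -> i \notin B) ->
  xi (\sum_(i in A) e i *: g i) (\sum_(i in B) f i *: g i) = 0.
Proof.
move=> dAB; rewrite xi_suml big1 // => i iA.
by rewrite xiZl xi_sym coefE (negbTE (dAB i iA)) mulr0.
Qed.

Lemma orth_flat p A B : (forall i, i \in A -> i \notin B) -> orth xi (flat p A) (flat p B).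
Proof.
move=> dAB; split; first by exists p; apply: flat_p.
split; first by exists p; apply: flat_p.
move=> a b c d Aa Ab Bc Bd.
have [e ->] := flat_diff Aa Ab; have [f ->] := flat_diff Bc Bd.
exact: orth_sums.
Qed.

Lemma flat_subspace p A : subspace (flat p A).
Proof.
exists p, (fun w => exists c : 'I_N -> F, w = \sum_(i in A) c i *: g i); split.
  split; first by exists (fun _ => 0); rewrite big1 // => i _; rewrite scale0r.
  split.
    move=> x y [c ->] [d ->]; exists (fun i => c i + d i); rewrite -big_split /=.
    by apply: eq_bigr => i _; rewrite scalerDl.
  move=> a x [c ->]; exists (fun i => a * c i); rewrite scaler_sumr.
  by apply: eq_bigr => i _; rewrite scalerA.
move=> x; split.
  by case=> c ->; exists (\sum_(i in A) c i *: g i); split => //; exists c.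
by case=> w [[c ->] ->]; exists c.
Qed.

Lemma flat_canon p A x : flat p A x ->
  x - p = \sum_(i in A) (xi (x - p) (g i) / xi (g i) (g i)) *: g i.
Proof.
case=> c ->; rewrite addrC addKr; apply: eq_bigr => i iA.
by rewrite coefE iA mulfK // xi_self_neq0.
Qed.

Lemma inter_flat p A B : Defs.subset (inter (flat p A) (flat p B)) (flat p (A :&: B)).
Proof.
move=> x [xA xB]; exists (fun i => xi (x - p) (g i) / xi (g i) (g i)).
have E := flat_canon xA; rewrite (big_setID (A:=A) B) /= [X in _ = _ + X]big1 ?addr0 in E.
  by rewrite -E addrC subrK.
move=> i; rewrite inE => /andP[iB _]; by rewrite (flat_notin xB iB) mul0r scale0r.
Qed.

Lemma flat_Hk p (A : {set 'I_N}) : is_Hk #|A| (flat p A).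
Proof.
exists p, (fun k => g (enum_val k)); split.
  apply: orth_free => [k|k k' nkk]; first exact: gnz.
  apply: gor; apply: contra nkk => /eqP /enum_val_inj ->; done.
move=> x; split.
  by case=> c ->; exists (fun k => c (enum_val k)); rewrite big_enum_val.
case=> c ->.
have [A0|/card_gt0P [x0 x0A]] := posnP #|A|.
  exists (fun _ => 0); rewrite [X in _ = _ + X]big1 => [|i _]; last by rewrite scale0r.
  by rewrite big1 // => k; have := ltn_ord k; rewrite {2}A0.
exists (fun i => c (enum_rank_in x0A i)); congr (_ + _); rewrite [RHS]big_enum_val /=.
by apply: eq_bigr => k _; rewrite enum_valK_in.
Qed.

Lemma flat_join p (I : pset V) A B : Defs.subset I (flat p A) -> Defs.subset (flat p (A :&: B)) I ->
  is_join I (flat p (A :\: B)) (flat p A).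
Proof.
move=> IA BI; split; first exact: flat_subspace.
split => //; split; first by apply: flat_sub; apply: subsetDl.
move=> D sD ID BD x [c ->].
have -> : p + \sum_(i in A) c i *: g i =
   (p + \sum_(i in A :&: B) c i *: g i) + (p + \sum_(i in A :\: B) c i *: g i) - p.
  by rewrite (big_setID (A:=A) B) /= [LHS]helper3.
apply: affine_comb => //.
- by apply: (ID _); apply: (BI _); exists c.
- by apply: (BD _); exists c.
- by apply: (ID _); apply: (BI _); apply: flat_p.
Qed.

Lemma orth_sub (X Y Y' : pset V) : orth xi X Y -> Defs.subset Y' Y -> (exists y, Y' y) -> orth xi X Y'.
Proof.
case=> hX [_ H] sY nY; split => //; split => // a b c d Xa Xb Yc Yd.
by apply: H => //; apply: sY.
Qed.

Lemma flat_perp_circ p (A1 A2 : {set 'I_N}) : perp_circ xi (flat p A1) (flat p A2).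
Proof.
have Ip : inter (flat p A1) (flat p A2) p by split; apply: flat_p.
exists p; split => //.
exists (flat p (A1 :\: A2)), (flat p (A2 :\: A1)).
split; first exact: flat_subspace. split; first exact: flat_subspace.
split; first exact: flat_p. split; first exact: flat_p.
split.
  split; last by exists p; split => //; apply: flat_p.
  apply: (@orth_sub _ (flat p A2)); last by exists p.
    by apply: orth_flat => i; rewrite inE => /andP[].
  by move=> x [].
split.
  split; last by exists p; split => //; apply: flat_p.
  apply: (@orth_sub _ (flat p A1)); last by exists p.
    by apply: orth_flat => i; rewrite inE => /andP[].
  by move=> x [].
split.
  split; last by exists p; split; apply: flat_p.
  by apply: orth_flat => i; rewrite !inE => /andP[h1 h2]; rewrite h2.
split.
  apply: flat_join; first by move=> x [].
  by move=> x hx; split; apply: (flat_sub _ hx); rewrite ?subsetIl ?subsetIr.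
apply: flat_join; first by move=> x [].
by move=> x hx; split; apply: (flat_sub _ hx); rewrite ?subsetIl ?subsetIr.
Qed.
End Flat.

Lemma sub_eq_helper (i w i' w' : V) : i + w = i' + w' -> i - i' = w' - w.
Proof. by move=> e; apply/eqP; rewrite subr_eq addrAC [w' + i']addrC -e addrK. Qed.

Lemma helper4 (q a b : V) : q + a + (q + b) - q = q + (a + b).
Proof. by rewrite -addrA [q + b - q]addrC addKr -addrA. Qed.

Lemma lin_subB (W : pset V) a b : lin_subspace W -> W a -> W b -> W (a - b).
Proof. case=> _ [WD WZ] Wa Wb; rewrite -scaleN1r; exact: (WD _ _ Wa (WZ _ _ Wb)). Qed.

Lemma rebase (X : pset V) q : subspace X -> X q ->
  exists W, lin_subspace W /\ forall x, X x <-> exists w, W w /\ x = q + w.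
Proof.
case=> p0 [W [lW HX]] /HX [w0 [Ww0 ->]].
exists W; split => // x; rewrite HX; split.
  case=> w [Ww ->]; exists (w - w0); split; first exact: lin_subB.
  by rewrite addrACA subrr addr0.
case=> w [Ww ->]; exists (w0 + w); split; last by rewrite addrA.
by case: lW => _ [WD _]; apply: WD.
Qed.

Lemma inter_subspace (X Y : pset V) q : subspace X -> subspace Y -> X q -> Y q ->
  subspace (inter X Y).
Proof.
move=> sX sY Xq Yq.
have [W1 [[W10 [W1D W1Z]] H1]] := rebase sX Xq.
have [W2 [[W20 [W2D W2Z]] H2]] := rebase sY Yq.
exists q, (fun w => W1 w /\ W2 w); split.
  split; first by [].
  split; first by move=> a b [] ? ? [] ? ?; split; [apply: W1D | apply: W2D].
  by move=> a w [] ? ?; split; [apply: W1Z | apply: W2Z].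
move=> x; split.
  case=> /H1 [w1 [Ww1 ->]] /H2 [w2 [Ww2 e]].
  have e' : w1 = w2 by apply: (addrI q).
  by exists w1; split => //; split => //; rewrite e'.
case=> w [[Ww1 Ww2] ->]; split; [apply/H1 | apply/H2]; by exists w.
Qed.

Lemma join_sub (I Z X : pset V) q : is_join I Z X -> subspace I -> subspace Z -> I q -> Z q ->
  forall x, X x -> exists i z, I i /\ Z z /\ x = i + z - q.
Proof.
case=> _ [_ [_ least]] sI sZ Iq Zq.
have [WI [[WI0 [WID WIZ]] HI]] := rebase sI Iq.
have [WZ [[WZ0 [WZD WZZ]] HZ]] := rebase sZ Zq.
pose S : pset V := fun x => exists i z, I i /\ Z z /\ x = i + z - q.
have sS : subspace S.
  exists q, (fun w => exists a b, WI a /\ WZ b /\ w = a + b); split.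
    split; first by exists 0, 0; rewrite addr0.
    split.
      move=> x y [a [b [Wa [Wb ->]]]] [a' [b' [Wa' [Wb' ->]]]].
      exists (a + a'), (b + b'); split; first exact: WID.
      by split; [exact: WZD | rewrite addrACA].
    move=> c x [a [b [Wa [Wb ->]]]]; exists (c *: a), (c *: b).
    by split; [exact: WIZ | split; [exact: WZZ | rewrite scalerDr]].
  move=> x; split.
    case=> i [z [/HI [a [Wa ->]] [/HZ [b [Wb ->]] ->]]].
    exists (a + b); split; first by exists a, b.
    by rewrite helper4.
  case=> w [[a [b [Wa [Wb ->]]]] ->]; exists (q + a), (q + b).
  split; first by apply/HI; exists a.
  split; first by apply/HZ; exists b.
  by rewrite helper4.
apply: least => //.
  by move=> x Ix; exists x, q; split => //; split => //; rewrite addrK.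
by move=> x Zx; exists q, x; split => //; split => //; rewrite addrC addKr.
Qed.

Lemma pc_decomp (X1 X2 : pset V) x : perp_circ xi X1 X2 -> X1 x ->
  exists i y, inter X1 X2 i /\ x = i + y /\
    (forall c d, X2 c -> X2 d -> xi y (d - c) = 0).
Proof.
case=> q [Iq [Z1 [Z2 [sZ1 [sZ2 [Z1q [Z2q [oZ1I [oZ2I [oZ12 [j1 j2]]]]]]]]]]] X1x.
have sI : subspace (inter X1 X2).
  by apply: (inter_subspace (q := q)); [case: j1 | case: j2 | case: Iq | case: Iq].
have [i [z [Ii [Zz ->]]]] := join_sub j1 sI sZ1 Iq Z1q X1x.
exists i, (z - q); split => //; split; first by rewrite addrA.
move=> c d /(join_sub j2 sI sZ2 Iq Z2q) [ic [zc [Iic [Zzc ->]]]]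
           /(join_sub j2 sI sZ2 Iq Z2q) [id [zd [Iid [Zzd ->]]]].
have -> : id + zd - q - (ic + zc - q) = (id - ic) + (zd - zc).
  by rewrite opprB addrA addrNK opprD addrACA.
rewrite xiDr.
case: oZ1I => [[_ [_ h1]] _]; case: oZ12 => [[_ [_ h2]] _].
by rewrite h1 // h2 // addr0.
Qed.

Lemma ortL_sound (X2 : pset V) p x y : X2 p -> X2 y -> y <> p ->
  (forall z, X2 z -> z <> p -> exists X1, perp_circ xi X1 X2 /\ X1 x /\ ~ X1 z) ->
  xi (x - p) (y - p) = 0.
Proof.
move=> X2p X2y yp H.
have [X1 [pc [X1x _]]] := H y X2y yp.
have [i [w [[X1i X2i] [ex ow]]]] := pc_decomp pc X1x.
case: (eqVneq i p) => [ip| ip].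
  by rewrite ex ip [p + w]addrC addrK; apply: ow.
have ip' : i <> p by apply/eqP.
have [X1' [pc' [X1'x nX1'i]]] := H i X2i ip'.
have [i' [w' [[X1'i' X2i'] [ex' ow']]]] := pc_decomp pc' X1'x.
have e : i + w = i' + w' by rewrite -ex -ex'.
have E := sub_eq_helper e.
have ii' : i = i'.
  apply/eqP; rewrite -subr_eq0; apply/eqP; apply: NNPP => nz.
  apply: (xi_aniso nz).
  by rewrite [X in xi X _]E xiBl ow' // ow // subrr.
by exfalso; apply: nX1'i; rewrite ii'.
Qed.

Lemma frame N u v : dim_ge V N -> (2 <= N)%N -> u != 0 -> v != 0 -> xi u v = 0 ->
  exists (g : 'I_N -> V) (i0 i1 : 'I_N), (forall i, g i != 0) /\
    (forall i j, i != j -> xi (g i) (g j) = 0) /\ i0 != i1 /\ g i0 = u /\ g i1 = v.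
Proof.
move=> hd hN unz vnz uv.
have os : orthseq [:: u; v].
  split; first by case=> [|[|i]].
  case=> [|[|i]] [|[|j]] //= _ _ _; by rewrite xi_sym.
have [t [[tnz tor] [st pt]]] := extN hd os ltac:(done).
exists (fun i : 'I_N => t`_i), (Ordinal (ltnW hN)), (Ordinal hN).
split; first by move=> i; apply: tnz; rewrite st.
split; first by move=> i j nij; apply: tor; rewrite ?st //; apply: contra nij => /eqP/val_inj ->.
split; first done.
by split; [exact: (pt 0%N) | exact: (pt 1%N)].
Qed.

Lemma nonzero_vec N : dim_ge V N -> (0 < N)%N -> exists w : V, w != 0.
Proof.
move=> hd hN; have [t [[tnz _] [st _]]] := extN (s := [::]) hd (ltac:(by split)) (isT : (0 <= N)%N).
by exists t`_0; apply: tnz; rewrite st.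
Qed.

Lemma subset_card (T : finType) (A : {set T}) s : (s <= #|A|)%N ->
  exists S : {set T}, S \subset A /\ #|S| = s.
Proof.
elim: s => [|s IH] hs; first by exists set0; rewrite sub0set cards0.
have [S [SA cS]] := IH (ltnW hs).
have : ~~ (A \subset S).
  by apply/negP => /subset_leq_card; rewrite cS; rewrite leqNgt hs.
case/subsetPn => x xA xS.
exists (x |: S); split; first by rewrite subUset sub1set xA SA.
by rewrite cardsU1 xS cS.
Qed.

Lemma pick_set N (i0 i1 : 'I_N) k : i0 != i1 -> (1 <= k)%N -> (k < N)%N ->
  exists B : {set 'I_N}, [/\ i0 \in B, i1 \notin B & #|B| = k].
Proof.
move=> n01 hk hkN.
have c2 : #|~: [set i0; i1]| = (N - 2)%N.
  have := cardsC [set i0; i1]; rewrite cards2 n01 card_ord; lia.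
have [S [SC cS]] := subset_card (s := k.-1) (A := ~: [set i0; i1]) ltac:(rewrite c2; lia).
have Si0 : i0 \notin S by apply/negP => /(subsetP SC); rewrite !inE eqxx.
have Si1 : i1 \notin S by apply/negP => /(subsetP SC); rewrite !inE eqxx orbT.
exists (i0 |: S); split.
- by rewrite !inE eqxx.
- by rewrite !inE negb_or eq_sym n01 Si1.
- rewrite cardsU1 Si0 cS; lia.
Qed.

Definition line (a w : V) : pset V := fun x => exists t : F, x = a + t *: w.

Lemma line_Hk a w : w != 0 -> is_Hk 1 (line a w).
Proof.
move=> wnz; exists a, (fun _ => w); split.
  move=> c; rewrite big_ord1 => /eqP; rewrite scaler_eq0 (negbTE wnz) orbF => /eqP c0 i.
  by rewrite (ord1 i).
move=> x; split.
  by case=> t ->; exists (fun _ => t); rewrite big_ord1.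
by case=> c ->; exists (c ord0); rewrite big_ord1.
Qed.

Lemma line_a a w : line a w a.
Proof. by exists 0; rewrite scale0r addr0. Qed.
Lemma line_b a b : line a (b - a) b.
Proof. by exists 1; rewrite scale1r addrC subrK. Qed.

Lemma Hk_subspace k (X : pset V) : is_Hk k X -> subspace X.
Proof.
case=> p [v [_ HX]]; exists p, (fun w => exists c : 'I_k -> F, w = \sum_i c i *: v i).
split.
  split; first by exists (fun _ => 0); rewrite big1 // => i _; rewrite scale0r.
  split.
    move=> x y [c ->] [d ->]; exists (fun i => c i + d i); rewrite -big_split /=.
    by apply: eq_bigr => i _; rewrite scalerDl.
  move=> a x [c ->]; exists (fun i => a * c i); rewrite scaler_sumr.
  by apply: eq_bigr => i _; rewrite scalerA.
move=> x; rewrite HX; split.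
  by case=> c ->; exists (\sum_i c i *: v i); split => //; exists c.
by case=> w [[c ->] ->]; exists c.
Qed.

Lemma Hk_seteq k (X Y : pset V) : is_Hk k X -> seteq X Y -> is_Hk k Y.
Proof. by case=> p [v [fv HX]] e; exists p, v; split => // x; rewrite -e. Qed.

Lemma col_param (L : pset V) a b c : is_Hk 1 L -> L a -> L b -> L c -> a <> b ->
  exists t, c = a + t *: (b - a).
Proof.
case=> p [v [_ HL]] /HL [ca ->] /HL [cb ->] /HL [cc ->] ab.
rewrite !big_ord1 in ab *.
have nz : cb ord0 - ca ord0 != 0.
  apply/eqP => /eqP; rewrite subr_eq0 => /eqP e; apply: ab; by rewrite e.
exists ((cc ord0 - ca ord0) / (cb ord0 - ca ord0)).
rewrite opprD addrACA subrr add0r -scalerBl scalerA divfK // -addrA -scalerDl.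
by rewrite [ca ord0 + _]addrC subrK.
Qed.

Lemma col_same N (a c : V) : dim_ge V N -> (0 < N)%N -> collinear a a c.
Proof.
move=> hd hN; case: (eqVneq c a) => [-> | ca].
  have [w wnz] := nonzero_vec hd hN.
  exists (line a w); split; first exact: line_Hk.
  by split; [|split]; apply: line_a.
exists (line a (c - a)); split; first by apply: line_Hk; rewrite subr_eq0.
by split; [|split]; [apply: line_a | apply: line_a | apply: line_b].
Qed.

Lemma col_iff N k (hd : dim_ge V N) (hk : (1 <= k)%N) (hkN : (k < N)%N) (a b c : V) :
  collinear a b c <-> (a = b \/ forall X, is_Hk k X -> X a -> X b -> X c).
Proof.
split.
  case=> L [HL [La [Lb Lc]]].
  case: (eqVneq a b) => [-> | ab]; first by left.
  right => X HX Xa Xb.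
  have ab' : a <> b by apply/eqP.
  have [t ->] := col_param HL La Lb Lc ab'.
  exact: affine_line (Hk_subspace HX) Xa Xb.
case=> [<- | H]; first by apply: (col_same (N := N)) => //; lia.
case: (eqVneq a b) => [<- | ab]; first by apply: (col_same (N := N)) => //; lia.
case: (classic (exists t, c = a + t *: (b - a))) => [[t ->] | nt].
  exists (line a (b - a)); split; first by apply: line_Hk; rewrite subr_eq0 eq_sym.
  by split; [apply: line_a | split; [apply: line_b | exists t]].
exfalso.
set u := b - a.
have unz : u != 0 by rewrite subr_eq0 eq_sym.
set kk := xi (c - a) u / xi u u.
set w := (c - a) - kk *: u.
have wnz : w != 0.
  apply/eqP => w0; apply: nt; exists kk.
  have e : c - a = kk *: u by apply/eqP; rewrite -subr_eq0 -/w w0.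
  by rewrite -e addrC subrK.
have uw : xi u w = 0.
  rewrite xiBr xiZr xi_sym /kk divfK ?subrr //; exact: xi_self_neq0.
have [g [i0 [i1 [gnz [gor [n01 [g0 g1]]]]]]] := frame hd ltac:(lia) unz wnz uw.
have [B [Bi0 Bi1 cB]] := pick_set n01 hk hkN.
have HX : is_Hk k (flat g a B) by rewrite -cB; apply: flat_Hk.
have Xb : flat g a B b by have := flat_gen g a 1 Bi0; rewrite g0 scale1r /u addrC subrK.
have := flat_notin gor (H _ HX (flat_p g a B) Xb) Bi1.
have -> : c - a = kk *: u + w by rewrite /w [RHS]addrC subrK.
rewrite g1 xiDl xiZl uw mulr0 add0r; apply/eqP; exact: xi_self_neq0.
Qed.

Lemma ortL_complete N k1 k2 s (hd : dim_ge V N) (h2 : (1 <= k2)%N) (hk2N : (k2 < N)%N)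
  (hs : (s < k2)%N) (hsum : (s + (N - k2))%N = k1) (p x y : V) :
  x != p -> y != p -> xi (x - p) (y - p) = 0 ->
  exists X2, is_Hk k2 X2 /\ X2 p /\ X2 y /\ forall z, X2 z -> z <> p ->
    exists X1, is_Hk k1 X1 /\ X1 x /\ ~ X1 z /\ perp_circ xi X1 X2 /\
      is_Hk s (inter X1 X2) /\ ~ seteq (inter X1 X2) X1 /\ ~ seteq (inter X1 X2) X2.
Proof.
move=> xp yp o.
set u := x - p; set v := y - p.
have unz : u != 0 by rewrite subr_eq0.
have vnz : v != 0 by rewrite subr_eq0.
have vu : xi v u = 0 by rewrite xi_sym.
have [g [i0 [i1 [gnz [gor [n01 [g0 g1]]]]]]] := frame hd ltac:(lia) vnz unz vu.
have [B2 [B2i0 B2i1 cB2]] := pick_set n01 h2 hk2N.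
exists (flat g p B2); split; first by rewrite -cB2; apply: flat_Hk.
split; first exact: flat_p.
have yv : y = p + 1 *: g i0 by rewrite g0 scale1r /v addrC subrK.
have xu : x = p + 1 *: g i1 by rewrite g1 scale1r /u addrC subrK.
split; first by rewrite yv; apply: flat_gen.
move=> z X2z zp.
have [j0 [j0B2 nzj0]] : exists j0, j0 \in B2 /\ xi (z - p) (g j0) != 0.
  apply: NNPP => Hn; apply: zp.
  have e := flat_canon gnz gor X2z.
  rewrite big1 in e; first by apply/eqP; rewrite -subr_eq0 e.
  move=> i iB; case: (eqVneq (xi (z - p) (g i)) 0) => [-> | nz]; first by rewrite mul0r scale0r.
  by exfalso; apply: Hn; exists i.
have cD : #|B2 :\ j0| = k2.-1 by move: (cardsD1 j0 B2); rewrite j0B2 cB2; lia.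
have [S [SB cS]] := subset_card (A := B2 :\ j0) (s := s) ltac:(rewrite cD; lia).
have SB2 : S \subset B2 := subset_trans SB (subD1set B2 j0).
set A1 := S :|: ~: B2.
have cA1 : #|A1| = k1.
  rewrite cardsU.
  have -> : S :&: ~: B2 = set0.
    apply/setP => i; rewrite !inE; case: (boolP (i \in S)) => // iS.
    by rewrite (subsetP SB2 _ iS).
  rewrite cards0 subn0; have := cardsC B2; rewrite card_ord cB2 cS; lia.
have nX1z : ~ flat g p A1 z.
  move=> X1z.
  have nA : j0 \notin A1.
    rewrite !inE negb_or j0B2 andbT; apply/negP => /(subsetP SB); by rewrite !inE eqxx.
  by move: nzj0; rewrite (flat_notin gor X1z nA) eqxx.
have X1x : flat g p A1 x by rewrite xu; apply: flat_gen; rewrite !inE B2i1 orbT.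
have eS : A1 :&: B2 = S.
  apply/setP => i; rewrite !inE; case: (boolP (i \in S)) => iS /=.
    by rewrite (subsetP SB2 _ iS).
  by case: (i \in B2).
exists (flat g p A1); split; first by rewrite -cA1; apply: flat_Hk.
split; first exact: X1x.
split; first exact: nX1z.
split; first exact: flat_perp_circ.
split.
  apply: (@Hk_seteq _ (flat g p S)); first by rewrite -cS; apply: flat_Hk.
  move=> w; split.
    move=> h; split; apply: (flat_sub _ h); [rewrite subsetUl // | exact: SB2].
  by rewrite -eS; apply: inter_flat.
split.
  move=> E; have [_ X2x] := proj2 (E x) X1x.
  have := flat_notin gor X2x B2i1; rewrite -/u -g1; exact/eqP/xi_self_neq0.
move=> E; have [X1z _] := proj2 (E z) X2z; exact: nX1z.
Qed.

Lemma line_diff (a u : V) s t : (a + s *: u) - (a + t *: u) = (s - t) *: u.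
Proof. by rewrite opprD addrACA subrr add0r scalerBl. Qed.

Lemma line_perp_iff (a b c d : V) :
  line_perp xi a b c d <-> a <> b /\ c <> d /\ xi (b - a) (d - c) = 0.
Proof.
split.
  case=> ab [cd [L1 [L2 [_ [_ [L1a [L1b [L2c [L2d [_ [_ h]]]]]]]]]]].
  by split => //; split => //; apply: h.
case=> ab [cd o]; split => //; split => //.
exists (line a (b - a)), (line c (d - c)).
split; first by apply: line_Hk; rewrite subr_eq0; apply/eqP => e; apply: ab.
split; first by apply: line_Hk; rewrite subr_eq0; apply/eqP => e; apply: cd.
split; first exact: line_a. split; first exact: line_b.
split; first exact: line_a. split; first exact: line_b.
split; first by exists a; apply: line_a.
split; first by exists c; apply: line_a.
move=> a' b' c' d' [s1 ->] [s2 ->] [t1 ->] [t2 ->].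
by rewrite !line_diff xiZl xiZr o !mulr0.
Qed.

Lemma xi_scale_cancel (w u : V) s : s != 0 -> xi w (s *: u) = 0 -> xi w u = 0.
Proof. by move=> snz /eqP; rewrite xiZr mulf_eq0 (negbTE snz) /= => /eqP. Qed.

Definition LP_sem (a b c d : V) :=
  a <> b /\ c <> d /\ exists f, collinear a b f /\
   ((f <> a /\ xi (c - f) (a - f) = 0 /\ xi (d - f) (a - f) = 0) \/
    (f <> b /\ xi (c - f) (b - f) = 0 /\ xi (d - f) (b - f) = 0)).

Lemma diff_helper (c d f : V) : (d - f) - (c - f) = d - c.
Proof. by rewrite opprB addrA subrK. Qed.

Lemma LP_iff (a b c d : V) : LP_sem a b c d <-> a <> b /\ c <> d /\ xi (b - a) (d - c) = 0.
Proof.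
split.
  case=> ab [cd [f [[L [HL [La [Lb Lf]]]] H]]].
  split => //; split => //.
  have [t ef] := col_param HL La Lb Lf ab.
  suff [h1 h2] : xi (c - f) (b - a) = 0 /\ xi (d - f) (b - a) = 0.
    by rewrite xi_sym -(diff_helper c d f) xiBl h1 h2 subrr.
  case: H => [[fa [h1 h2]] | [fb [h1 h2]]].
    have tnz : - t != 0.
      rewrite oppr_eq0; apply/eqP => t0; apply: fa; by rewrite ef t0 scale0r addr0.
    have e : a - f = (- t) *: (b - a) by rewrite ef opprD addrA subrr add0r scaleNr.
    rewrite e in h1 h2.
    by split; apply: (xi_scale_cancel tnz).
  have tnz : 1 - t != 0.
    apply/eqP => t0; apply: fb.
    have t1 : t = 1 by apply/eqP; rewrite eq_sym -subr_eq0 t0.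
    by rewrite ef t1 scale1r addrC subrK.
  have e : b - f = (1 - t) *: (b - a).
    by rewrite ef scalerBl scale1r opprD addrA.
  rewrite e in h1 h2.
  by split; apply: (xi_scale_cancel tnz).
case=> ab [cd o]; split => //; split => //.
set u := b - a.
have unz : u != 0 by rewrite subr_eq0; apply/eqP => e; apply: ab.
set t := xi (c - a) u / xi u u.
exists (a + t *: u); split.
  exists (line a u); split; first exact: line_Hk.
  by split; [apply: line_a | split; [apply: line_b | exists t]].
have h1 : xi (c - (a + t *: u)) u = 0.
  by rewrite opprD addrA xiBl xiZl /t divfK ?subrr //; exact: xi_self_neq0.
have h2 : xi (d - (a + t *: u)) u = 0.
  have -> : d - (a + t *: u) = (d - c) + (c - (a + t *: u)) by rewrite addrA subrK.
  by rewrite xiDl h1 addr0 xi_sym.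
case: (eqVneq (a + t *: u) a) => [fa | fa].
  right; rewrite fa; split; first by [].
  by rewrite -/u -fa.
left; split; first by apply/eqP.
have e : a - (a + t *: u) = (- t) *: u by rewrite opprD addrA subrr add0r scaleNr.
by rewrite e !xiZr h1 h2 !mulr0.
Qed.

Section Formulas.
Variables (DA DB : pset V -> Prop) (R : pset V -> pset V -> Prop).

Definition FOr f g := FNeg (FAnd (FNeg f) (FNeg g)).
Definition FImp f g := FNeg (FAnd f (FNeg g)).
Definition FAllP i f := FNeg (FExP i (FNeg f)).
Definition FAllA i f := FNeg (FExA i (FNeg f)).

Definition fCol a b c :=
  FOr (FEqP a b) (FAllA 0 (FImp (FInA a 0) (FImp (FInA b 0) (FInA c 0)))).
Definition fOrtBody p x := FImp (FInB 11 0)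
    (FImp (FNeg (FEqP 11 p)) (FExA 0 (FAnd (FRel 0 0) (FAnd (FInA x 0) (FNeg (FInA 11 0)))))).
Definition fOrtL p x y :=
  FExB 0 (FAnd (FInB p 0) (FAnd (FInB y 0) (FAllP 11 (fOrtBody p x)))).
Definition fOrt p x y := FOr (FEqP x p) (FOr (FEqP y p) (fOrtL p x y)).
Definition phiC := fCol 0 1 2.
Definition phiP :=
  FAnd (FNeg (FEqP 0 1)) (FAnd (FNeg (FEqP 2 3)) (FExP 10 (FAnd (fCol 0 1 10)
    (FOr (FAnd (FNeg (FEqP 10 0)) (FAnd (fOrt 10 2 0) (fOrt 10 3 0)))
         (FAnd (FNeg (FEqP 10 1)) (FAnd (fOrt 10 2 1) (fOrt 10 3 1))))))).

Notation ev := (eval DA DB R).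

Lemma eval_Or eP eA eB f g : ev eP eA eB (FOr f g) <-> ev eP eA eB f \/ ev eP eA eB g.
Proof. rewrite /=; split; [move=> h; apply: NNPP => h'; apply: h; split => ? ; apply: h'; by [left|right] | by case=> [h|h] [] ]. Qed.

Lemma eval_Imp eP eA eB f g : ev eP eA eB (FImp f g) <-> (ev eP eA eB f -> ev eP eA eB g).
Proof. rewrite /=; split; [move=> h hf; apply: NNPP => hg; exact: h | move=> h [hf hg]; exact: hg (h hf)]. Qed.

Lemma eval_AllP eP eA eB i f : ev eP eA eB (FAllP i f) <-> forall x, ev (upd eP i x) eA eB f.
Proof. rewrite /=; split; [move=> h x; apply: NNPP => hn; apply: h; by exists x | move=> h [x hx]; exact: hx (h x)]. Qed.

Lemma eval_AllA eP eA eB i f : ev eP eA eB (FAllA i f) <-> forall X, DA X -> ev eP (upd eA i X) eB f.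
Proof. rewrite /=; split; [move=> h X hX; apply: NNPP => hn; apply: h; by exists X | move=> h [X [hX hx]]; exact: hx (h X hX)]. Qed.

Lemma eval_And eP eA eB f g : ev eP eA eB (FAnd f g) <-> ev eP eA eB f /\ ev eP eA eB g.
Proof. exact: iff_refl. Qed.
Lemma eval_Neg eP eA eB f : ev eP eA eB (FNeg f) <-> ~ ev eP eA eB f.
Proof. exact: iff_refl. Qed.
Lemma eval_EqP eP eA eB i j : ev eP eA eB (FEqP i j) <-> eP i = eP j.
Proof. exact: iff_refl. Qed.
Lemma eval_ExP eP eA eB i f : ev eP eA eB (FExP i f) <-> exists x, ev (upd eP i x) eA eB f.
Proof. exact: iff_refl. Qed.

Lemma upd_eq (T : Type) (e : nat -> T) i x : upd e i x i = x.
Proof. by rewrite /upd eqxx. Qed.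
Lemma upd_neq (T : Type) (e : nat -> T) i j x : j != i -> upd e i x j = e j.
Proof. by rewrite /upd => /negbTE ->. Qed.

Lemma eval_fCol eP eA eB a b c : ev eP eA eB (fCol a b c) <->
  (eP a = eP b \/ forall X, DA X -> X (eP a) -> X (eP b) -> X (eP c)).
Proof.
rewrite /fCol eval_Or eval_AllA.
split; case=> [h|h]; [by left | right | by left | right] => X hX.
  by move: (h X hX); rewrite !eval_Imp /= !upd_eq.
by rewrite !eval_Imp /= !upd_eq; apply: h.
Qed.

Lemma eval_fOrtL eP eA eB p x y : p != 11%N -> x != 11%N ->
  ev eP eA eB (fOrtL p x y) <->
  exists X2, DB X2 /\ X2 (eP p) /\ X2 (eP y) /\
    forall z, X2 z -> z <> eP p -> exists X1, DA X1 /\ R X1 X2 /\ X1 (eP x) /\ ~ X1 z.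
Proof.
move=> hp hx; rewrite /fOrtL; split.
  case=> X2 [DX2 [h1 [h2 h3]]]; exists X2; split => //.
  move: h1 h2 => /= h1 h2; rewrite upd_eq in h1 h2.
  split => //; split => //.
  move=> z X2z zp.
  move: (proj1 (eval_AllP eP eA (upd eB 0 X2) 11 (fOrtBody p x)) h3) => /(_ z).
  rewrite /fOrtBody !eval_Imp /= !upd_eq (upd_neq _ _ hp) => /(_ X2z zp) [X1 [DX1 [hR [hX hz]]]].
  exists X1; split => //; move: hR hX hz; rewrite !upd_eq (upd_neq _ _ hx) => hR hX hz.
  by split => //; split => //.
case=> X2 [DX2 [h1 [h2 h3]]]; exists X2; split => //.
split; first by rewrite /= upd_eq.
split; first by rewrite /= upd_eq.
apply: (proj2 (eval_AllP eP eA (upd eB 0 X2) 11 (fOrtBody p x))) => z.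
rewrite /fOrtBody !eval_Imp /= !upd_eq (upd_neq _ _ hp) => X2z zp.
have [X1 [DX1 [hR [hX hz]]]] := h3 z X2z zp.
exists X1; split => //; rewrite !upd_eq (upd_neq _ _ hx); by split => //; split => //.
Qed.

Lemma eval_fOrt eP eA eB p x y : p != 11%N -> x != 11%N ->
  ev eP eA eB (fOrt p x y) <-> eP x = eP p \/ eP y = eP p \/
  exists X2, DB X2 /\ X2 (eP p) /\ X2 (eP y) /\
    forall z, X2 z -> z <> eP p -> exists X1, DA X1 /\ R X1 X2 /\ X1 (eP x) /\ ~ X1 z.
Proof. by move=> hp hx; rewrite /fOrt !eval_Or !eval_EqP eval_fOrtL. Qed.

End Formulas.

Section Gen.
Variables (k1 k2 N s : nat) (R : pset V -> pset V -> Prop).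
Hypotheses (hk1 : (1 <= k1)%N) (hk2 : (1 <= k2)%N) (hd : dim_ge V N)
  (hk1N : (k1 < N)%N) (hk2N : (k2 < N)%N) (hs : (s < k2)%N) (hsum : (s + (N - k2))%N = k1).
Hypothesis hR : forall X1 X2, R X1 X2 -> perp_circ xi X1 X2.
Hypothesis hR' : forall X1 X2, is_Hk k1 X1 -> is_Hk k2 X2 -> perp_circ xi X1 X2 ->
  is_Hk s (inter X1 X2) -> ~ seteq (inter X1 X2) X1 -> ~ seteq (inter X1 X2) X2 -> R X1 X2.

Lemma Ort_iff (p x y : V) :
  (x = p \/ y = p \/ exists X2, is_Hk k2 X2 /\ X2 p /\ X2 y /\
    forall z, X2 z -> z <> p -> exists X1, is_Hk k1 X1 /\ R X1 X2 /\ X1 x /\ ~ X1 z)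
  <-> xi (x - p) (y - p) = 0.
Proof.
split.
  case=> [-> | [-> | [X2 [_ [X2p [X2y H]]]]]]; first by rewrite subrr xi0l.
    by rewrite subrr xi0r.
  case: (eqVneq y p) => [-> | yp]; first by rewrite subrr xi0r.
  have yp' : y <> p by apply/eqP.
  apply: (ortL_sound X2p X2y yp') => z X2z zp.
  have [X1 [_ [hX [hx hz]]]] := H z X2z zp.
  by exists X1; split; [apply: hR | split].
move=> o; case: (eqVneq x p) => [-> | xp]; first by left.
case: (eqVneq y p) => [-> | yp]; first by right; left.
right; right.
have [X2 [HX2 [X2p [X2y H]]]] := ortL_complete hd hk2 hk2N hs hsum xp yp o.
exists X2; split => //; split => //; split => // z X2z zp.
have [X1 [HX1 [X1x [nz [pc [hI [n1 n2]]]]]]] := H z X2z zp.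
by exists X1; split => //; split; [apply: hR' | split].
Qed.

Lemma main_gen : definable_M (is_Hk k1) (is_Hk k2) R xi.
Proof.
exists (phiC), (phiP) => eP eA eB _ _; split.
  rewrite /phiC eval_fCol; exact: (iff_sym (col_iff hd hk1 hk1N _ _ _)).
rewrite /phiP eval_And eval_Neg eval_EqP eval_And eval_Neg eval_EqP eval_ExP line_perp_iff.
rewrite -LP_iff /LP_sem.
split; case=> n01 [n23 [f hf]]; split => //; split => //; exists f.
  move: hf; rewrite eval_And eval_fCol eval_Or !eval_And !eval_fOrt // !eval_Neg !eval_EqP.
  rewrite /upd /= !Ort_iff -(col_iff hd hk1 hk1N).
  done.
rewrite eval_And eval_fCol eval_Or !eval_And !eval_fOrt // !eval_Neg !eval_EqP.
rewrite /upd /= !Ort_iff -(col_iff hd hk1 hk1N).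
done.
Qed.
End Gen.
End Main.

Unset Implicit Arguments.
Set Strict Implicit.

Theorem theorem2p4 (F : fieldType) (V : lmodType F) (xi : V -> V -> F)
  (k1 k2 : nat)
  (xi_sym : forall u v, xi u v = xi v u)
  (xi_lin : forall (a : F) u v w, xi (a *: u + v) w = a * xi u w + xi v w)
  (xi_nondeg : forall u, (forall w, xi u w = 0) -> u = 0)
  (xi_aniso : forall u, u <> 0 -> xi u u <> 0)
  (hk1 : (1 <= k1)%N) (hk2 : (1 <= k2)%N) :
  (forall m : nat, (m < k1)%N -> (m < k2)%N -> dim_ge V (k1 + k2 - m)%N ->
     definable_M (is_Hk (V:=V) k1) (is_Hk (V:=V) k2) (perp_m xi m k1 k2) xi)
  /\
  (dim_ge V k1.+1 -> dim_ge V k2.+1 ->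
     definable_M (is_Hk (V:=V) k1) (is_Hk (V:=V) k2) (perp_circ_res xi k1 k2) xi).
Proof.
split.
  move=> m hm1 hm2 hd.
  apply: (main_gen (N := (k1 + k2 - m)%N) (s := m) xi_sym xi_lin xi_aniso) => //; try lia.
  by move=> X1 X2 [[pc _] _].
move=> hd1 hd2.
have hd : dim_ge V (maxn k1 k2).+1.
  case: (leqP k1 k2) => h.
    exact: hd2.
  exact: hd1.
apply: (main_gen (N := (maxn k1 k2).+1) (s := (k1 + k2 - (maxn k1 k2).+1)%N)
          xi_sym xi_lin xi_aniso) => //; try lia.
  by move=> X1 X2 [pc _].
Qed.
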